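(* Let $\Gamma$ be a finite connected graph, let $\emptyset\ne Y\subset Z$ be subsets of its vertex set, and let $s$ be a nonnegative integer-valued function on the vertices. Let $H_w(s,Y)$ be the expected number of particles stopping in $Y$ if $s(x)$ particles start at each vertex $x$ and perform independent simple random walks stopped on first hitting $Z$, and let $H_r(s,Y)$ be the number of particles stopping in $Y$ if instead they perform rotor-router walks (one at a time, rotors not reset) stopped on first hitting $Z$. Let $H(x)=H_w(1_x,Y)$. Then $$|H_r(s,Y)-H_w(s,Y)|\le\sum_{u}\sum_{v\sim u}|H(u)-H(v)|,$$ independently of $s$, of the initial rotor configuration, and of the cyclic orderings.
   Context: Rotor-router walk on $\Gamma$: each vertex has a fixed cyclic ordering of its neighbors and a rotor pointing to one of them; a particle at $u$ advances the rotor at $u$ to the next neighbor in the cyclic order and then moves to that neighbor. The outer sum is over all vertices $u$ of $\Gamma$ and the inner sum over neighbors $v$ of $u$. *)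

(* Defs.v *)
From mathcomp Require Import all_boot.
From Stdlib Require Import Reals.
Set Implicit Arguments. Unset Strict Implicit. Unset Printing Implicit Defensive.

Section RotorDefs.
Variable V : finType.

Definition rsum (I : finType) (P : pred I) (f : I -> R) : R :=
  \big[Rplus/0%R]_(i | P i) f i.

Definition deg (adj : rel V) (u : V) : nat := #|[pred v | adj u v]|.

(* firstp adj Y Z n x : probability that simple random walk started at x,
   stopped on first hitting Z, stops exactly at step n and at a vertex of Y. *)
Fixpoint firstp (adj : rel V) (Y Z : {set V}) (n : nat) (x : V) : R :=
  match n with
  | 0 => if x \in Y then 1%R else 0%R
  | n'.+1 => if x \in Z then 0%R
             else (/ INR (deg adj x) *
                   rsum (fun v => adj x v) (fun v => firstp adj Y Z n' v))%R
  end.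

(* Rotor configuration: rot u is the neighbour the rotor at u points to.
   nbrs u is the cyclic ordering of the neighbours of u.  A particle at u
   advances the rotor to the next neighbour in the cyclic order, then moves
   there. *)
Definition advance (nbrs : V -> seq V) (rot : V -> V) (u : V) : V -> V :=
  fun w => if w == u then next (nbrs u) (rot u) else rot w.

Inductive rr_walk (nbrs : V -> seq V) (Z : {set V})
  : (V -> V) -> V -> (V -> V) -> V -> Prop :=
| rr_stop rot x : x \in Z -> rr_walk nbrs Z rot x rot x
| rr_step rot x rot' y :
    x \notin Z ->
    rr_walk nbrs Z (advance nbrs rot x) (next (nbrs x) (rot x)) rot' y ->
    rr_walk nbrs Z rot x rot' y.

Inductive rr_process (nbrs : V -> seq V) (Y Z : {set V})
  : (V -> V) -> seq V -> (V -> V) -> nat -> Prop :=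
| rrp_nil rot : rr_process nbrs Y Z rot [::] rot 0
| rrp_cons rot x l rot1 y rot2 n :
    rr_walk nbrs Z rot x rot1 y ->
    rr_process nbrs Y Z rot1 l rot2 n ->
    rr_process nbrs Y Z rot (x :: l) rot2 (n + (y \in Y)).
End RotorDefs.

(* Main.v *)
Require Import Defs.
From HB Require Import structures.
From mathcomp Require Import all_boot.
From Stdlib Require Import Reals Lra.
Set Implicit Arguments. Unset Strict Implicit. Unset Printing Implicit Defensive.

HB.instance Definition _ := Monoid.isComLaw.Build R 0%R Rplus
  (fun a b c => esym (Rplus_assoc a b c)) Rplus_comm Rplus_0_l.

Definition lsum (l : seq R) : R := foldr Rplus 0%R l.

Lemma lsum0 : lsum [::] = 0%R. Proof. by []. Qed.

Lemma lsum_rcons l x : lsum (rcons l x) = (lsum l + x)%R.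
Proof. elim: l => [|a l IH] /=; rewrite ?IH; ring. Qed.

Lemma take_bound (l : seq R) i j :
  (Rabs (lsum (take i l) - lsum (take j l)) <= lsum (map Rabs l))%R.
Proof.
elim: l i j => [|a l IH] [|i] [|j] /=.
all: try (rewrite Rminus_diag_eq // Rabs_R0; try lra; fail).
- have := IH 0%N 0%N; rewrite /= Rminus_diag_eq // Rabs_R0; have := Rabs_pos a; move=> ? ?; rewrite Rminus_diag_eq // Rabs_R0; lra.
- have := IH 0%N j. rewrite take0 lsum0. have := Rabs_triang (- a) (0 - lsum (take j l)).
  rewrite /= Rabs_Ropp.
  replace (0 - (a + lsum (take j l)))%R with (- a + (0 - lsum (take j l)))%R by ring.
  lra.
- have := IH i 0%N. rewrite take0 lsum0. have := Rabs_triang a (lsum (take i l) - 0).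
  rewrite /=. replace (a + lsum (take i l) - 0)%R with (a + (lsum (take i l) - 0))%R by ring.
  lra.
- have := IH i j. have := Rabs_pos a.
  replace (a + lsum (take i l) - (a + lsum (take j l)))%R with (lsum (take i l) - lsum (take j l))%R by ring.
  lra.
Qed.

Lemma cpot_next_gen (V : eqType) (s : seq V) (f : V -> R) w :
  uniq s -> w \in s -> lsum (map f s) = 0%R ->
  (lsum (take (index (next s w) s).+1 (map f s))
   - lsum (take (index w s).+1 (map f s)) = f (next s w))%R.
Proof.
move=> Us Ws S0. rewrite next_nth Ws.
case: s Us Ws S0 => [|a s'] // Us Ws S0.
have Hi : index w (a::s') < size (a::s') by rewrite index_mem.
case: (ltnP (index w (a::s')) (size s')) => Hlt.
- set i := index w (a :: s') in Hi Hlt *.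
  have E: nth a s' i = nth a (a::s') i.+1 by [].
  rewrite E index_uniq //. rewrite (take_nth (f a) (n := i.+1)) ?size_map //.
  rewrite lsum_rcons (nth_map a) //; ring.
- have Ei : index w (a::s') = size s' by apply/eqP; rewrite eqn_leq Hlt -ltnS Hi.
  rewrite Ei nth_default //= eqxx /=.
  rewrite [take (size s') _]take_oversize ?size_map //.
  rewrite /= in S0. rewrite S0 /lsum /=. rewrite take0 /=; ring.
Qed.

Section Big.
Variable I : eqType.

Lemma big_lsum (r : seq I) (f : I -> R) :
  \big[Rplus/0%R]_(i <- r) f i = lsum (map f r).
Proof. elim: r => [|a r IH]; rewrite ?big_nil ?big_cons ?IH //. Qed.

Lemma big_abs (r : seq I) (P : pred I) (f : I -> R) :
  (Rabs (\big[Rplus/0%R]_(i <- r | P i) f i) <= \big[Rplus/0%R]_(i <- r | P i) Rabs (f i))%R.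
Proof.
elim: r => [|a r IH]; rewrite ?big_nil ?big_cons.
- rewrite Rabs_R0; apply: Rle_refl.
- case: (P a) => //. apply: Rle_trans (Rabs_triang _ _) _. lra.
Qed.

Lemma big_le (r : seq I) (P : pred I) (f g : I -> R) :
  (forall i, f i <= g i)%R ->
  (\big[Rplus/0%R]_(i <- r | P i) f i <= \big[Rplus/0%R]_(i <- r | P i) g i)%R.
Proof.
move=> Hfg; elim: r => [|a r IH]; rewrite ?big_nil ?big_cons; first by apply: Rle_refl.
case: (P a) => //. have := Hfg a. lra.
Qed.

Lemma big_cv (r : seq I) (P : pred I) (u : I -> nat -> R) (l : I -> R) :
  (forall i, Un_cv (u i) (l i)) ->
  Un_cv (fun n => \big[Rplus/0%R]_(i <- r | P i) u i n) (\big[Rplus/0%R]_(i <- r | P i) l i).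
Proof.
move=> Hu; elim: r => [|a r IH].
- rewrite big_nil. apply: (Un_cv_ext (fun _ => 0%R)); first by move=> n; rewrite big_nil.
  move=> eps He; exists 0%N => n _; rewrite /Rdist Rminus_diag_eq // Rabs_R0; lra.
- rewrite big_cons. case E: (P a).
  + apply: (Un_cv_ext (fun n => u a n + \big[Rplus/0%R]_(i <- r | P i) u i n)%R).
      by move=> n; rewrite big_cons E.
    exact: CV_plus.
  + apply: (Un_cv_ext (fun n => \big[Rplus/0%R]_(i <- r | P i) u i n)%R) => //.
    by move=> n; rewrite big_cons E.
Qed.
Lemma big_sub (r : seq I) (P : pred I) (f g : I -> R) :
  \big[Rplus/0%R]_(i <- r | P i) (f i - g i)%R =
  (\big[Rplus/0%R]_(i <- r | P i) f i - \big[Rplus/0%R]_(i <- r | P i) g i)%R.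
Proof.
elim: r => [|a r IH]; rewrite ?big_nil ?big_cons; first ring.
case: (P a); rewrite IH //; ring.
Qed.
End Big.

Section Pot.
Variables (V : finType) (H : V -> R) (nbrs : V -> seq V).

Definition gg (u v : V) : R := (H u - H v)%R.
Definition cpot (u w : V) : R := lsum (take (index w (nbrs u)).+1 (map (gg u) (nbrs u))).
Definition Cpot (rot : V -> V) : R := rsum predT (fun u => cpot u (rot u)).

Lemma Cpot_advance rot x :
  Cpot (advance nbrs rot x) = (Cpot rot + (cpot x (next (nbrs x) (rot x)) - cpot x (rot x)))%R.
Proof.
rewrite /Cpot /rsum (bigD1 x) //= [in RHS](bigD1 x) //=.
rewrite /advance eqxx.
rewrite (eq_bigr (fun u => cpot u (rot u))); last by move=> i Hi; rewrite (negbTE Hi).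
simpl. ring.
Qed.

Variables (Y Z : {set V}).
Hypothesis nbrs_uniq : forall u, uniq (nbrs u).
Hypothesis harm : forall u, u \notin Z -> lsum (map (gg u) (nbrs u)) = 0%R.
Hypothesis HZ : forall y, y \in Z -> H y = if y \in Y then 1%R else 0%R.

Definition Inv (rot : V -> V) := forall u, u \notin Z -> rot u \in nbrs u.

Lemma walk_inv rot x rot' y : rr_walk nbrs Z rot x rot' y -> Inv rot ->
  (H x + Cpot rot = H y + Cpot rot')%R /\ Inv rot' /\ y \in Z.
Proof.
elim => {rot x rot' y} [rot x xZ | rot x rot' y xZ _ IH] Hinv.
  by split; [|split].
have Hinv' : Inv (advance nbrs rot x).
  move=> u uZ; rewrite /advance; case: eqP => [->|_]; last exact: Hinv.
  by rewrite mem_next; apply: Hinv.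
have [E [I2 yZ]] := IH Hinv'. split; last by split.
rewrite -E Cpot_advance.
have := cpot_next_gen (f := gg x) (nbrs_uniq x) (Hinv x xZ) (harm xZ).
rewrite /cpot /gg => ->. ring.
Qed.

Lemma process_inv rot l rot' n : rr_process nbrs Y Z rot l rot' n -> Inv rot ->
  (lsum (map H l) + Cpot rot = INR n + Cpot rot')%R.
Proof.
elim => {rot l rot' n} [rot | rot x l rot1 y rot2 n Hw _ IH] Hinv.
  by rewrite /= Rplus_0_l.
have [E [I1 yZ]] := walk_inv Hw Hinv.
have := IH I1. rewrite -plusE plus_INR /=. move: E; rewrite (HZ yZ).
case: (y \in Y) => /= E1 E2; lra.
Qed.
End Pot.

Lemma lsum_count (V : finType) (h : V -> R) (l : seq V) :
  lsum (map h l) = rsum predT (fun x => INR (count_mem x l) * h x)%R.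
Proof.
elim: l => [|a l IH].
  by rewrite /rsum big1 //= => i _; rewrite Rmult_0_l.
rewrite /= -/(lsum _) IH /rsum.
under [in RHS]eq_bigr => i _ do rewrite -plusE plus_INR Rmult_plus_distr_r.
rewrite big_split /=.
congr Rplus; symmetry.
rewrite (bigD1 a) //= eqxx big1 => [|i Hi]; last first.
  by rewrite eq_sym (negbTE Hi) /= Rmult_0_l.
simpl. ring.
Qed.

Lemma lsum_gg (V : finType) (H : V -> R) u (l : seq V) :
  lsum (map (gg H u) l) = (INR (size l) * H u - lsum (map H l))%R.
Proof.
elim: l => [|a l IH]; first by rewrite /lsum /=; ring.
rewrite [size _]/= S_INR /= IH /gg. ring.
Qed.

Lemma cv_shift (u : nat -> R) l : Un_cv u l -> Un_cv (fun n => u n.+1) l.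
Proof.
move=> Hu eps He; have [N HN] := Hu eps He; exists N => n Hn; apply: HN.
apply/leP; move/leP: Hn => Hn; by apply: leq_trans Hn _.
Qed.

Theorem mainTheorem12
  (V : finType) (adj : rel V)
  (adj_sym : symmetric adj) (adj_irr : irreflexive adj)
  (adj_conn : forall x y : V, connect adj x y)
  (Y Z : {set V}) (HY0 : Y != set0) (HYZ : Y \subset Z)
  (H : V -> R)
  (H_def : forall x, infinite_sum (fun n => firstp adj Y Z n x) (H x))
  (nbrs : V -> seq V)
  (nbrs_uniq : forall u, uniq (nbrs u))
  (nbrs_adj : forall u v, (v \in nbrs u) = adj u v)
  (rot0 : V -> V)
  (rot0_ok : forall u, nbrs u != [::] -> rot0 u \in nbrs u)
  (s : V -> nat) (starts : seq V)
  (starts_s : forall x, count_mem x starts = s x)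
  (rotf : V -> V) (Hr : nat)
  (Hrun : rr_process nbrs Y Z rot0 starts rotf Hr) :
  (Rabs (INR Hr - rsum predT (fun x => INR (s x) * H x))
   <= rsum predT (fun u => rsum (fun v => adj u v) (fun v => Rabs (H u - H v))))%R.
Proof.
have Hdef : forall x, Un_cv (sum_f_R0 (fun n => firstp adj Y Z n x)) (H x) := H_def.
have conv : forall u (f : V -> R), rsum (fun v => adj u v) f = lsum (map f (nbrs u)).
  move=> u f; rewrite /rsum -big_filter (perm_big (nbrs u)) ?big_lsum //.
  apply: uniq_perm; first by rewrite filter_uniq // index_enum_uniq.
    exact: nbrs_uniq.
  by move=> v; rewrite mem_filter mem_index_enum andbT nbrs_adj.
have degE : forall u, INR (deg adj u) = INR (size (nbrs u)).
  move=> u; rewrite /deg cardE; congr INR; apply: perm_size; apply: uniq_perm.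
  - exact: enum_uniq.
  - exact: nbrs_uniq.
  - by move=> v; rewrite mem_enum nbrs_adj.
have nonnil : forall u, u \notin Z -> nbrs u != [::].
  move=> u uZ; case/set0Pn: HY0 => y yY.
  have yZ := subsetP HYZ y yY.
  move: (adj_conn u y) => /connectP [p Pp Ly].
  case: p Pp Ly => [|v p] /=.
    by move=> _ Ly; move: uZ; rewrite -Ly yZ.
  move=> /andP [Auv _] _; apply/negP => /eqP E.
  by have := Auv; rewrite -nbrs_adj E.
have HZ : forall y, y \in Z -> H y = if y \in Y then 1%R else 0%R.
  move=> y yZ; eapply UL_sequence; first exact: (Hdef y).
  apply: (Un_cv_ext (fun _ => if y \in Y then 1%R else 0%R)).
    elim => [|n IH] //=. by rewrite -IH yZ Rplus_0_r.
  move=> eps He; exists 0%N => n _; rewrite /Rdist Rminus_diag_eq // Rabs_R0; lra.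
have harm : forall u, u \notin Z -> lsum (map (gg H u) (nbrs u)) = 0%R.
  move=> u uZ.
  have dn0 : INR (deg adj u) <> 0%R.
    rewrite degE; apply: not_0_INR => /eqP; rewrite size_eq0; exact/negP/nonnil.
  have uY : u \notin Y by apply: contra uZ; apply: (subsetP HYZ).
  have key : H u = (/ INR (deg adj u) * rsum (fun v => adj u v) H)%R.
    eapply UL_sequence; first exact: (cv_shift (Hdef u)).
    apply: (Un_cv_ext (fun N => / INR (deg adj u) *
        rsum (fun v => adj u v) (fun v => sum_f_R0 (fun n => firstp adj Y Z n v) N))%R).
      elim => [|N IH].
        by rewrite /= (negbTE uZ) (negbTE uY) Rplus_0_l.
      have -> : sum_f_R0 (fun n => firstp adj Y Z n u) N.+2 =
         (sum_f_R0 (fun n => firstp adj Y Z n u) N.+1 + firstp adj Y Z N.+2 u)%R by [].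
      rewrite -IH.
      have -> : firstp adj Y Z N.+2 u =
        (/ INR (deg adj u) * rsum (fun v => adj u v) (firstp adj Y Z N.+1))%R.
        by rewrite /= (negbTE uZ).
      rewrite -Rmult_plus_distr_l; congr Rmult.
      rewrite /rsum -big_split /=; apply: eq_bigr => v _ //.
    apply: CV_mult.
      move=> eps He; exists 0%N => n _; rewrite /Rdist Rminus_diag_eq // Rabs_R0; lra.
    exact: big_cv.
  rewrite lsum_gg -conv -degE key; field; exact: dn0.
have inv0 : Inv nbrs Z rot0.
  by move=> u uZ; apply: rot0_ok; apply: nonnil.
have E := process_inv nbrs_uniq harm HZ Hrun inv0.
have -> : rsum predT (fun x => INR (s x) * H x)%R = lsum (map H starts).
  by rewrite lsum_count /rsum; apply: eq_bigr => x _; rewrite starts_s.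
have -> : (INR Hr - lsum (map H starts) =
   rsum predT (fun u => cpot H nbrs u (rot0 u) - cpot H nbrs u (rotf u)))%R.
  have -> : rsum predT (fun u => cpot H nbrs u (rot0 u) - cpot H nbrs u (rotf u))%R =
     (Cpot H nbrs rot0 - Cpot H nbrs rotf)%R.
    by rewrite /Cpot /rsum big_sub.
  lra.
apply: Rle_trans (big_abs _ _ _) _.
apply: big_le => u.
rewrite conv /cpot.
have := take_bound (map (gg H u) (nbrs u)) (index (rot0 u) (nbrs u)).+1 (index (rotf u) (nbrs u)).+1.
by rewrite -map_comp.
Qed.
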